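(* Let $P_{II*}=P_{II}$. For a filter $\Xi\in P_{III*}$, $\mathcal C_{\Xi\text{-unc}}\neq\emptyset$ if and only if there exists a partition $\xi\in P_I$ such that $\Xi=\uparrow\{\downarrow\{\xi\}\}$, i.e. $\Xi=\{\boldsymbol\xi\in P_{II}:\xi\in\boldsymbol\xi\}$, where $\downarrow\{\xi\}=\{\upsilon\in P_I:\upsilon\preceq\xi\}$ and $\uparrow\{\boldsymbol\zeta\}=\{\boldsymbol\upsilon\in P_{II}:\boldsymbol\zeta\subseteq\boldsymbol\upsilon\}$.
   Context: Let $n\ge1$, $L=\{1,\dots,n\}$, and for $i\in L$ let $\mathcal H_i$ be a Hilbert space with $1<\dim\mathcal H_i<\infty$; $\mathcal H_X=\bigotimes_{i\in X}\mathcal H_i$ and $\mathcal D_X$ is the set of density operators on $\mathcal H_X$. $P_I$ is the set of partitions of $L$ ordered by refinement ($\upsilon\preceq\xi$ iff every part of $\upsilon$ lies in a part of $\xi$). For $\xi\in P_I$, $\mathcal D_{\xi\text{-unc}}=\{\varrho\in\mathcal D_L:\varrho=\bigotimes_{X\in\xi}\varrho_X,\ \varrho_X\in\mathcal D_X\}$, and for $S\subseteq P_I$, $\mathcal D_{S\text{-unc}}=\bigcup_{\xi\in S}\mathcal D_{\xi\text{-unc}}$. $P_{II}$ is the set of nonempty down-sets of $P_I$, ordered by inclusion; $P_{III*}$ is the set of nonempty up-sets of $P_{II*}$. For $\Xi\in P_{III*}$: $\overline\Xi=P_{II*}\setminus\Xi$ and $\mathcal C_{\Xi\text{-unc}}=\bigcap_{\boldsymbol\xi'\in\overline\Xi}(\mathcal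 D_L\setminus\mathcal D_{\boldsymbol\xi'\text{-unc}})\cap\bigcap_{\boldsymbol\xi\in\Xi}\mathcal D_{\boldsymbol\xi\text{-unc}}$. *)

(* Defs.v *)
From HB Require Import structures.
From mathcomp Require Import all_boot all_order all_algebra.
Set Implicit Arguments. Unset Strict Implicit. Unset Printing Implicit Defensive.
Import Order.TTheory GRing.Theory Num.Theory.
Local Open Scope ring_scope.

(* Subsystems: L = 'I_n (sites 0..n-1), site i has Hilbert space C^(d i).
   The computational basis of H_X is indexed by the configurations on X. *)
Definition conf (n : nat) (d : 'I_n -> nat) (X : {set 'I_n}) : finType :=
  {dffun forall i : {i : 'I_n | i \in X}, 'I_(d (val i))}.

Definition confL (n : nat) (d : 'I_n -> nat) : finType :=
  {dffun forall i : 'I_n, 'I_(d i)}.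

Definition restr (n : nat) (d : 'I_n -> nat) (X : {set 'I_n}) (a : confL d)
  : conf d X := [ffun i : {i : 'I_n | i \in X} => a (val i)].

Definition is_density (C : numClosedFieldType) (T : finType) (rho : T -> T -> C)
  : Prop :=
  (forall v : T -> C, 0 <= \sum_(a : T) \sum_(b : T) (v a)^* * rho a b * v b)
  /\ \sum_(a : T) rho a a = 1.

Definition PI (n : nat) : {set {set {set 'I_n}}} :=
  [set xi | partition xi [set: 'I_n]].

Definition refines (n : nat) (u xi : {set {set 'I_n}}) : bool :=
  [forall X in u, [exists Y in xi, X \subset Y]].

Definition PII (n : nat) : {set {set {set {set 'I_n}}}} :=
  [set S | [&& S != set0, S \subset PI n &
     [forall xi in S, forall u in PI n, refines u xi ==> (u \in S)]]].

Definition PIII (n : nat) : {set {set {set {set {set 'I_n}}}}} :=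
  [set Xi | [&& Xi != set0, Xi \subset PII n &
     [forall S in Xi, forall T in PII n, (S \subset T) ==> (T \in Xi)]]].

Definition unc (C : numClosedFieldType) (n : nat) (d : 'I_n -> nat)
  (xi : {set {set 'I_n}}) (rho : confL d -> confL d -> C) : Prop :=
  is_density rho /\
  exists rhoX : forall X : {set 'I_n}, conf d X -> conf d X -> C,
    (forall X, X \in xi -> is_density (rhoX X)) /\
    forall a b : confL d, rho a b = \prod_(X in xi) rhoX X (restr X a) (restr X b).

Definition uncS (C : numClosedFieldType) (n : nat) (d : 'I_n -> nat)
  (S : {set {set {set 'I_n}}}) (rho : confL d -> confL d -> C) : Prop :=
  exists2 xi, xi \in S & unc xi rho.

Definition C_unc (C : numClosedFieldType) (n : nat) (d : 'I_n -> nat)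
  (Xi : {set {set {set {set 'I_n}}}}) (rho : confL d -> confL d -> C) : Prop :=
  is_density rho /\
  (forall S', S' \in PII n :\: Xi -> ~ uncS S' rho) /\
  (forall S, S \in Xi -> uncS S rho).

Definition down (n : nat) (xi : {set {set 'I_n}}) : {set {set {set 'I_n}}} :=
  [set u in PI n | refines u xi].
Definition up (n : nat) (Z : {set {set {set 'I_n}}}) : {set {set {set {set 'I_n}}}} :=
  [set S in PII n | Z \subset S].

(* Main.v *)
Require Import Defs.
From HB Require Import structures.
From mathcomp Require Import all_boot all_order all_algebra.
From mathcomp Require Import ring.
Import Order.TTheory GRing.Theory Num.Theory.
Local Open Scope ring_scope.
Set Implicit Arguments. Unset Strict Implicit.
Section A.
Variables (C : numClosedFieldType) (n : nat) (d : 'I_n -> nat).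
Local Notation T := (confL d).
Implicit Types (D E W X Y Z : {set 'I_n}) (a b c : T) (f : T -> C).
Implicit Types (P Q : {set {set 'I_n}}) (rho : T -> T -> C).
Definition ext (X : {set 'I_n}) (al : conf d X) (c : T) : T :=
  [ffun i => if insub i is Some k then insubd (c i) (nat_of_ord (al k)) else c i].
Lemma ext_in (X : {set 'I_n}) (al : conf d X) c i (h : i \in X) : ext al c i = al (exist _ i h).
Proof. apply: val_inj; rewrite ffunE insubT /= val_insubd /=.
by case: (al _) => m hm /=; rewrite hm. Qed.
Lemma ext_out (X : {set 'I_n}) (al : conf d X) c i : i \notin X -> ext al c i = c i.
Proof. by move=> h; rewrite ffunE insubF //; apply/negbTE. Qed.

Definition mix (W : {set 'I_n}) (a c : T) : T := [ffun i => if i \in W then a i else c i].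
Lemma mixE W a c i : mix W a c i = if i \in W then a i else c i.
Proof. by rewrite ffunE. Qed.

Definition agoff (D : {set 'I_n}) (c a : T) : bool := [forall i, (i \in D) || (c i == a i)].
Lemma agoffP D c a : reflect (forall i, i \notin D -> c i = a i) (agoff D c a).
Proof.
apply: (iffP forallP) => h i.
  by move=> hi; move: (h i); rewrite (negbTE hi) => /eqP.
by case hi: (i \in D) => //=; apply/eqP/h; rewrite hi.
Qed.

Definition S (D : {set 'I_n}) (a : T) (f : T -> C) : C := \sum_(c | agoff D c a) f c.

Lemma restr_ext (X : {set 'I_n}) (al : conf d X) c : restr X (ext al c) = al.
Proof. apply/ffunP => -[i h]; by rewrite ffunE /= (ext_in _ _ h). Qed.

Lemma ext_restr (X : {set 'I_n}) a c : agoff X a c -> ext (restr X a) c = a.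
Proof.
move/agoffP=> h; apply/ffunP => i; case hi: (i \in X).
  by rewrite (ext_in _ _ hi) ffunE.
by rewrite ext_out ?hi // h ?hi.
Qed.

Lemma agoff_ext (X : {set 'I_n}) (al : conf d X) c : agoff X (ext al c) c.
Proof. by apply/agoffP => i hi; rewrite ext_out. Qed.

Lemma sum_conf (X : {set 'I_n}) c (f : conf d X -> C) :
  \sum_(al : conf d X) f al = S X c (fun a => f (restr X a)).
Proof.
rewrite /S (reindex_onto (fun al : conf d X => ext al c) (restr X)); last first.
  by move=> a; apply: ext_restr.
apply: eq_big => [al|al _]; last by rewrite restr_ext.
by rewrite agoff_ext restr_ext eqxx.
Qed.

Lemma S_set0 a f : S set0 a f = f a.
Proof.
rewrite /S (big_pred1 a) // => c; apply/agoffP/eqP => [h|->//].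
by apply/ffunP => i; apply: h; rewrite inE.
Qed.

Lemma S_setT a f : S setT a f = \sum_c f c.
Proof. by apply: eq_bigl => c; apply/agoffP => i; rewrite inE. Qed.

Lemma S_eq D a f g : (forall c, agoff D c a -> f c = g c) -> S D a f = S D a g.
Proof. by move=> h; apply: eq_bigr. Qed.

Lemma S_base D a a' f : agoff D a a' -> S D a f = S D a' f.
Proof.
move/agoffP=> h; apply: eq_bigl => c; apply/agoffP/agoffP => h' i hi.
  by rewrite h' // h.
by rewrite h' // h.
Qed.

Lemma S_mulr D a f x : S D a (fun c => x * f c) = x * S D a f.
Proof. by rewrite /S mulr_sumr. Qed.

Lemma fubini D1 D2 a f : [disjoint D1 & D2] ->
  S (D1 :|: D2) a f = S D1 a (fun c1 => S D2 c1 f).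
Proof.
move=> dis; rewrite /S (partition_big (fun c => mix D1 c a) (fun c1 => agoff D1 c1 a)).
  apply: eq_bigr => c1 /agoffP h1; apply: eq_bigl => c.
  apply/andP/agoffP.
    case=> /agoffP h /eqP <- i hi; rewrite mixE; case: ifP => // hD1.
    by rewrite h // inE hD1.
  move=> h; split.
    apply/agoffP => i; rewrite inE negb_or => /andP[hi1 hi2].
    by rewrite h // h1.
  apply/eqP/ffunP => i; rewrite mixE; case: ifP => hi.
    by apply: h; rewrite (disjointFr dis hi).
  by rewrite h1 ?hi.
move=> c /agoffP h; apply/agoffP => i hi; by rewrite mixE (negbTE hi).
Qed.

Lemma shift E a c (f : T -> C) : S E a (fun b => f (mix E b c)) = S E c f.
Proof.
symmetry; rewrite /S (reindex_onto (fun b => mix E b c) (fun y => mix E y a)); last first.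
  move=> y /agoffP h; apply/ffunP => i; rewrite !mixE; case hi: (i \in E) => //.
  by rewrite h ?hi.
apply: eq_bigl => b; apply/andP/agoffP.
  case=> _ /eqP <- i hi; by rewrite mixE (negbTE hi).
move=> h; split; first by apply/agoffP => i hi; rewrite mixE (negbTE hi).
apply/eqP/ffunP => i; rewrite !mixE; case hi: (i \in E) => //.
by rewrite h ?hi.
Qed.

Definition local (W : {set 'I_n}) (f : T -> C) :=
  forall a a', (forall i, i \in W -> a i = a' i) -> f a = f a'.

Lemma S_local W E a a' f : local W f ->
  (forall i, i \in W -> i \notin E -> a i = a' i) -> S E a f = S E a' f.
Proof.
move=> hf h; rewrite -(shift E a a' f); apply: S_eq => b /agoffP hb.
apply: hf => i hi; rewrite mixE; case: ifP => // hE.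
by rewrite hb ?hE // h ?hE.
Qed.

Lemma disjP (A B : {set 'I_n}) : (forall i, i \in A -> i \in B -> False) -> [disjoint A & B].
Proof.
move=> h; rewrite -setI_eq0; apply/eqP/setP => i; rewrite !inE.
by apply/negbTE/andP => -[]; apply: h.
Qed.

Lemma triv_eq (P : {set {set 'I_n}}) A B i : trivIset P -> A \in P -> B \in P ->
  i \in A -> i \in B -> A = B.
Proof.
move=> /trivIsetP tP hA hB iA iB; case: (eqVneq A B) => // /(tP _ _ hA hB) dis.
by move: (disjointFr dis iA); rewrite iB.
Qed.

Lemma disj_cover (P : {set {set 'I_n}}) X : trivIset P -> X \in P ->
  [disjoint X & cover (P :\ X)].
Proof.
move=> tP hX; apply: disjP => i iX /bigcupP [B /setD1P [BX hB] iB].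
by move: BX; rewrite (triv_eq tP hB hX iB iX) eqxx.
Qed.

Lemma cover_D1 (P : {set {set 'I_n}}) X : partition P setT -> X \in P ->
  cover (P :\ X) = ~: X.
Proof.
case/and3P => /eqP hc tP _ hX; apply/setP => i; rewrite inE; apply/bigcupP/idP.
  move=> [B /setD1P [BX hB] iB]; apply/negP => iX.
  by move: BX; rewrite (triv_eq tP hB hX iB iX) eqxx.
move=> niX; have : i \in cover P by rewrite hc inE.
move=> /bigcupP [B hB iB]; exists B => //; rewrite !inE hB andbT.
by apply: contraNneq niX => <-.
Qed.

Lemma prod_trace (P : {set {set 'I_n}}) (F : {set 'I_n} -> T -> C) :
  trivIset P -> (forall X, X \in P -> local X (F X)) ->
  (forall X e, X \in P -> S X e (F X) = 1) ->
  forall e, S (cover P) e (fun c => \prod_(X in P) F X c) = 1.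
Proof.
move: {2}#|P| (leqnn #|P|) => m; elim: m P => [|m IH] P hm tP hl ht e.
  move: hm; rewrite leqn0 cards_eq0 => /eqP ->.
  by rewrite /cover big_set0 S_set0 big_set0.
case: (set_0Vmem P) => [->|[X hX]].
  by rewrite /cover big_set0 S_set0 big_set0.
transitivity (S (X :|: cover (P :\ X)) e (fun c => F X c * \prod_(Y in P :\ X) F Y c)).
  rewrite {1}/cover (big_setD1 X hX) /=; apply: S_eq => c _.
  by rewrite (big_setD1 X hX).
rewrite fubini; last exact: disj_cover.
transitivity (S X e (F X)); last exact: ht.
apply: S_eq => c1 _.
have tP' : trivIset (P :\ X) by apply: trivIsetS tP; apply: subsetDl.
transitivity (S (cover (P :\ X)) c1 (fun c => F X c1 * \prod_(Y in P :\ X) F Y c)).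
  apply: S_eq => c /agoffP h; congr (_ * _); apply: (hl X hX) => i iX.
  apply: h; move: (disj_cover tP hX) => /disjointFr /(_ iX) ->; done.
rewrite S_mulr IH ?mulr1 //.
- by rewrite -ltnS (leq_trans _ hm) // [#|P|](cardsD1 X) hX.
- by move=> Y /setD1P [_ hY]; apply: hl.
- by move=> Y e' /setD1P [_ hY]; apply: ht.
Qed.

Lemma S_mull D a f x : S D a (fun c => f c * x) = S D a f * x.
Proof. by rewrite /S mulr_suml. Qed.

Definition local2 W (F : T -> T -> C) := forall a a' b b',
  (forall i, i \in W -> a i = a' i) -> (forall i, i \in W -> b i = b' i) -> F a b = F a' b'.

Definition M (rho : T -> T -> C) Z a b := S (~: Z) a (fun c => rho c (mix Z b c)).

Lemma M_own rho X FX G : (forall a b, rho a b = FX a b * G a b) ->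
  local2 X FX -> local2 (~: X) G -> (forall e, S (~: X) e (fun c => G c c) = 1) ->
  forall a b, M rho X a b = FX a b.
Proof.
move=> hr hF hG ht a b; rewrite /M.
transitivity (S (~:X) a (fun c => FX a b * G c c)); last by rewrite S_mulr ht mulr1.
apply: S_eq => c /agoffP h; rewrite hr; congr (_ * _).
  by apply: hF => i iX; rewrite ?mixE ?iX // h // inE iX.
by apply: hG => // i; rewrite inE => niX; rewrite mixE (negbTE niX).
Qed.

Lemma splitM rho X Y g G : (forall a b, rho a b = g a b * G a b) ->
  local2 Y g -> local2 (~: Y) G -> (forall e, S (~: Y) e (fun c => G c c) = 1) ->
  (forall e, S Y e (fun c => g c c) = 1) ->
  forall a b, M rho X a b = M rho (X :&: Y) a b * M rho (X :\: Y) a b.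
Proof.
move=> hr hg hG hGt hgt a b.
have step2 : M rho (X :&: Y) a b = S (Y :\: X) a (fun c => g c (mix X b c)).
  rewrite /M; have -> : ~: (X :&: Y) = (Y :\: X) :|: ~: Y.
    by apply/setP => i; rewrite !inE; case: (i \in X); case: (i \in Y).
  rewrite fubini; last by apply: disjP => i; rewrite !inE; case: (i \in X); case: (i \in Y).
  apply: S_eq => c1 _.
  transitivity (S (~: Y) c1 (fun c => g c1 (mix X b c1) * G c c)); last first.
    by rewrite S_mulr hGt mulr1.
  apply: S_eq => c /agoffP h; rewrite hr; congr (_ * _).
    apply: hg => i iY; first by rewrite h // inE iY.
    by rewrite !mixE !inE iY andbT; case: (i \in X) => //; rewrite h // inE iY.
  apply: hG => // i; rewrite inE => niY; by rewrite mixE inE (negbTE niY) andbF.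
have step3 : M rho (X :\: Y) a b = S (~: X :\: Y) a (fun c => G c (mix X b c)).
  rewrite /M; have -> : ~: (X :\: Y) = Y :|: (~: X :\: Y).
    by apply/setP => i; rewrite !inE; case: (i \in X); case: (i \in Y).
  rewrite fubini; last by apply: disjP => i; rewrite !inE; case: (i \in X); case: (i \in Y).
  transitivity (S Y a (fun c1 => S (~: X :\: Y) a (fun c => G c (mix X b c)) * g c1 c1)); last first.
    by rewrite S_mulr hgt mulr1.
  apply: S_eq => c1 /agoffP h1.
  transitivity (S (~: X :\: Y) c1 (fun c => G c (mix X b c)) * g c1 c1); last first.
    congr (_ * _); apply: (@S_local (~: Y)).
      by move=> x x' hx; apply: hG => // i hi; rewrite !mixE; case: (i \in X) => //; apply: hx.
    by move=> i; rewrite inE => niY _; apply: h1.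
  rewrite -S_mull; apply: S_eq => c /agoffP h; rewrite hr mulrC; congr (_ * _).
    apply: hG => // i; rewrite inE => niY; by rewrite !mixE !inE niY.
  apply: hg => i iY; first by apply: h; rewrite !inE iY.
  by rewrite mixE !inE iY /=; apply: h; rewrite !inE iY.
have step4 : M rho X a b = S (Y :\: X) a (fun c => g c (mix X b c)) *
                           S (~: X :\: Y) a (fun c => G c (mix X b c)).
  rewrite /M; have EX : ~: X = (Y :\: X) :|: (~: X :\: Y).
    by apply/setP => i; rewrite !inE; case: (i \in X); case: (i \in Y).
  rewrite {1}EX.
  rewrite fubini; last by apply: disjP => i; rewrite !inE; case: (i \in X); case: (i \in Y).
  rewrite -S_mull; apply: S_eq => c1 /agoffP h1.
  transitivity (S (~: X :\: Y) c1 (fun c => g c1 (mix X b c1) * G c (mix X b c))).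
    apply: S_eq => c /agoffP h; rewrite hr; congr (_ * _).
    apply: hg => i iY; first by rewrite h // !inE iY.
    by rewrite !mixE; case: (i \in X) => //; rewrite h // !inE iY.
  rewrite S_mulr; congr (_ * _); apply: (@S_local (~: Y)).
    by move=> x x' hx; apply: hG => // i hi; rewrite !mixE; case: (i \in X) => //; apply: hx.
  by move=> i; rewrite inE => niY _; apply: h1; rewrite !inE (negbTE niY) andbF.
by rewrite step4 step2 step3.
Qed.

Lemma S_exchange D a D' a' (F : T -> T -> C) :
  S D a (fun x => S D' a' (F x)) = S D' a' (fun y => S D a (fun x => F x y)).
Proof. by rewrite /S exchange_big. Qed.

Lemma M_loc rho Z : local2 Z (M rho Z).
Proof.
move=> a a' b b' ha hb; rewrite /M (@S_base _ a a'); last first.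
  by apply/agoffP => i; rewrite inE negbK; apply: ha.
apply: S_eq => c _; congr (rho c _); apply/ffunP => i; rewrite !mixE.
by case: ifP => // /hb.
Qed.

Definition margc rho Z (e0 : T) : conf d Z -> conf d Z -> C :=
  fun al be => M rho Z (ext al e0) (ext be e0).
Arguments margc rho Z e0 _ _ : clear implicits.

Lemma ext_restr_in Z a (e0 : T) i : i \in Z -> ext (restr Z a) e0 i = a i.
Proof. by move=> h; rewrite (ext_in _ _ h) ffunE. Qed.

Lemma margc_restr rho Z (e0 : T) a b : margc rho Z e0 (restr Z a) (restr Z b) = M rho Z a b.
Proof. by apply: M_loc => i hi; apply: ext_restr_in. Qed.

Lemma restr_agree Z a a' : (forall i, i \in Z -> a i = a' i) -> restr Z a = restr Z a'.
Proof. by move=> h; apply/ffunP => -[i hi]; rewrite !ffunE /= h. Qed.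

Lemma psd_block rho Z e (w : conf d Z -> C) : is_density rho ->
  0 <= S Z e (fun x => S Z e (fun y => (w (restr Z x))^* * rho x y * w (restr Z y))).
Proof.
case=> hpsd _.
set u := fun x => if agoff Z x e then w (restr Z x) else 0.
have -> : S Z e (fun x => S Z e (fun y => (w (restr Z x))^* * rho x y * w (restr Z y)))
  = \sum_x \sum_y (u x)^* * rho x y * u y; last exact: hpsd.
rewrite /S big_mkcond; apply: eq_bigr => x _; rewrite /u; case: ifP => hx.
  rewrite big_mkcond; apply: eq_bigr => y _; case: ifP => //; by rewrite mulr0.
by rewrite big1 // => y _; rewrite conjC0 !mul0r.
Qed.

Lemma margc_density rho Z (e0 : T) : is_density rho -> is_density (margc rho Z e0).
Proof.
move=> hd; have dZ : [disjoint Z & ~: Z] by apply: disjP => i; rewrite inE => ->.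
split; last first.
  case: hd => _ <-; rewrite (sum_conf e0) -[RHS](S_setT e0) -(setUCr Z) fubini //.
  apply: S_eq => a _; rewrite margc_restr /M; apply: S_eq => c /agoffP h.
  congr (rho c _); apply/ffunP => i; rewrite mixE; case: ifP => // hi.
  by rewrite h // inE hi.
move=> v; rewrite (sum_conf e0).
set Q := S Z e0 _.
have -> : Q = S Z e0 (fun a => S (~: Z) a (fun c => S Z e0 (fun b =>
     (v (restr Z c))^* * rho c (mix Z b c) * v (restr Z (mix Z b c))))).
  apply: S_eq => a _; rewrite (sum_conf e0).
  transitivity (S Z e0 (fun b => (v (restr Z a))^* * M rho Z a b * v (restr Z b))).
    by apply: S_eq => b _; rewrite margc_restr.
  rewrite -S_exchange; apply: S_eq => b _.
  rewrite /M -S_mulr -S_mull; apply: S_eq => c /agoffP h.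
  have -> : restr Z c = restr Z a by apply: restr_agree => i hi; rewrite h // inE hi.
  have -> // : restr Z (mix Z b c) = restr Z b.
  by apply: restr_agree => i hi; rewrite mixE hi.
rewrite -fubini // setUCr S_setT.
rewrite (eq_bigr (fun c => S Z c (fun y => (v (restr Z c))^* * rho c y * v (restr Z y)))); last first.
  by move=> c _; rewrite -(shift Z e0 c).
rewrite -(S_setT e0) -(setUCr (~: Z)) setCK fubini; last first.
  by apply: disjP => i; rewrite inE => /negP.
apply: sumr_ge0 => e _.
have -> : S Z e (fun c => S Z c (fun y => (v (restr Z c))^* * rho c y * v (restr Z y)))
  = S Z e (fun x => S Z e (fun y => (v (restr Z x))^* * rho x y * v (restr Z y))).
  by apply: S_eq => c hc; apply: S_base.
exact: psd_block.
Qed.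

Definition Fl (rX : forall X, conf d X -> conf d X -> C) X a b := rX X (restr X a) (restr X b).

Lemma Fl_local rX X : local2 X (Fl rX X).
Proof. by move=> a a' b b' ha hb; rewrite /Fl (restr_agree ha) (restr_agree hb). Qed.

Lemma Fl_trace rX X e : is_density (rX X) -> S X e (fun c => Fl rX X c c) = 1.
Proof. by case=> _ <-; rewrite (sum_conf e). Qed.

Definition Gl (rX : forall X, conf d X -> conf d X -> C) (P : {set {set 'I_n}}) X a b :=
  \prod_(Y in P :\ X) Fl rX Y a b.

Lemma Gl_local rX P X : trivIset P -> X \in P -> local2 (~: X) (Gl rX P X).
Proof.
move=> tP hX a a' b b' ha hb; apply: eq_bigr => Y /setD1P [YX hY].
have sub : forall i, i \in Y -> i \in ~: X.
  move=> i iY; rewrite inE; apply/negP => iX.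
  by move: YX; rewrite (triv_eq tP hY hX iY iX) eqxx.
by apply: Fl_local => i /sub; [apply: ha | apply: hb].
Qed.

Lemma Gl_trace rX P X e : partition P setT -> X \in P ->
  (forall Y, Y \in P -> is_density (rX Y)) -> S (~: X) e (fun c => Gl rX P X c c) = 1.
Proof.
move=> hP hX hd; have tP : trivIset P by case/and3P: hP.
rewrite -(cover_D1 hP hX); apply: (@prod_trace (P :\ X) (fun Y c => Fl rX Y c c)).
- by apply: trivIsetS tP; apply: subsetDl.
- by move=> Y _ x x' h; apply: Fl_local.
- by move=> Y e' /setD1P [_ hY]; apply: Fl_trace; apply: hd.
Qed.

Lemma Fl_split rX P X rho : X \in P ->
  (forall a b, rho a b = \prod_(Y in P) rX Y (restr Y a) (restr Y b)) ->
  forall a b, rho a b = Fl rX X a b * Gl rX P X a b.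
Proof. by move=> hX h a b; rewrite h (big_setD1 X hX). Qed.

Lemma unc_split rho P Q rX rY X Y : partition P setT -> partition Q setT ->
  (forall Z, Z \in P -> is_density (rX Z)) -> (forall Z, Z \in Q -> is_density (rY Z)) ->
  (forall a b, rho a b = \prod_(Z in P) rX Z (restr Z a) (restr Z b)) ->
  (forall a b, rho a b = \prod_(Z in Q) rY Z (restr Z a) (restr Z b)) ->
  X \in P -> Y \in Q ->
  forall a b, Fl rX X a b = M rho (X :&: Y) a b * M rho (X :\: Y) a b.
Proof.
move=> hP hQ hdX hdY hrX hrY hX hY a b.
have tP : trivIset P by case/and3P: hP.
have tQ : trivIset Q by case/and3P: hQ.
rewrite -(@M_own rho X (Fl rX X) (Gl rX P X)) //.
- apply: (@splitM rho X Y (Fl rY Y) (Gl rY Q Y)).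
  + exact: Fl_split.
  + exact: Fl_local.
  + exact: Gl_local.
  + by move=> e; apply: Gl_trace.
  + by move=> e; apply: Fl_trace; apply: hdY.
- exact: Fl_split.
- exact: Fl_local.
- exact: Gl_local.
- by move=> e; apply: Gl_trace.
Qed.

Lemma notin_D1 P X W : trivIset P -> X \in P -> W != set0 -> W \subset X -> W \notin P :\ X.
Proof.
move=> tP hX /set0Pn [i iW] /subsetP sub; apply/setD1P => -[WX hW].
by move: WX; rewrite (triv_eq tP hW hX iW (sub _ iW)) eqxx.
Qed.

Definition refP P X Y := (X :&: Y) |: ((X :\: Y) |: (P :\ X)).

Lemma refP_block P X Y A i : trivIset P -> X \in P -> A \in refP P X Y -> i \in A ->
  A = if i \in X then (if i \in Y then X :&: Y else X :\: Y) else pblock P i.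
Proof.
move=> tP hX; rewrite !inE => /or3P [/eqP->|/eqP->|/andP[AX hA]] iA.
- by move: iA; rewrite inE => /andP[-> ->].
- by move: iA; rewrite inE => /andP[/negbTE -> ->].
case: ifP => iX; first by move: AX; rewrite (triv_eq tP hA hX iA iX) eqxx.
by rewrite (def_pblock tP hA iA).
Qed.

Lemma refP_part P X Y : partition P setT -> X \in P -> X :&: Y != set0 -> X :\: Y != set0 ->
  partition (refP P X Y) setT /\ #|refP P X Y| = #|P|.+1.
Proof.
move=> hP hX nI nD; case/and3P: hP => /eqP hc tP h0.
have nID : X :&: Y != X :\: Y.
  case/set0Pn: nI => i iI; apply/negP => /eqP E; move: (iI); rewrite E !inE.
  by move: iI; rewrite !inE => /andP[_ ->].
have n1 : X :&: Y \notin (X :\: Y) |: (P :\ X).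
  by rewrite in_setU1 negb_or nID /=; apply: notin_D1 => //; apply: subsetIl.
have n2 : X :\: Y \notin P :\ X by apply: notin_D1 => //; apply: subsetDl.
split; last first.
  by rewrite /refP cardsU1 n1 cardsU1 n2 [#|P|](cardsD1 X) hX.
apply/and3P; split.
- apply/eqP/setP => i; rewrite inE; apply/bigcupP.
  have : i \in cover P by rewrite hc inE.
  move=> /bigcupP [B hB iB]; case: (eqVneq B X) => [BX|BX].
    subst B; case iY: (i \in Y).
      by exists (X :&: Y); rewrite ?inE ?eqxx ?iB ?iY.
    by exists (X :\: Y); rewrite !inE ?eqxx ?iB ?iY ?orbT.
  by exists B; rewrite // !inE BX hB !orbT.
- apply/trivIsetP => A B hA hB AB; apply: disjP => i iA iB.
  by move: AB; rewrite (refP_block tP hX hA iA) (refP_block tP hX hB iB) eqxx.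
- rewrite !inE negb_or eq_sym nI negb_or eq_sym nD /=.
  by apply: contra h0 => /andP[].
Qed.

Lemma refP_unc rho P Q X Y (e0 : T) : partition P setT -> partition Q setT ->
  unc P rho -> unc Q rho -> X \in P -> Y \in Q -> X :&: Y != set0 -> X :\: Y != set0 ->
  unc (refP P X Y) rho.
Proof.
move=> hP hQ [hd [rX [hdX hrX]]] [_ [rY [hdY hrY]]] hX hY nI nD.
have tP : trivIset P by case/and3P: hP.
have hsp := unc_split hP hQ hdX hdY hrX hrY hX hY.
have nID : X :&: Y != X :\: Y.
  case/set0Pn: nI => i iI; apply/negP => /eqP E; move: (iI); rewrite E !inE.
  by move: iI; rewrite !inE => /andP[_ ->].
have n1 : X :&: Y \notin (X :\: Y) |: (P :\ X).
  by rewrite in_setU1 negb_or nID /=; apply: notin_D1 => //; apply: subsetIl.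
have n2 : X :\: Y \notin P :\ X by apply: notin_D1 => //; apply: subsetDl.
split => //.
exists (fun Z => if (Z == X :&: Y) || (Z == X :\: Y) then margc rho Z e0 else rX Z).
split.
  move=> Z hZ; case: ifP => [_|hZ']; first exact: margc_density.
  apply: hdX; move: hZ hZ'; rewrite !inE => /or3P [->|->|/andP[]//]; by rewrite ?orbT.
move=> a b; rewrite /refP big_setU1 //= big_setU1 //= !eqxx ?orbT /=.
rewrite !margc_restr (Fl_split hX hrX) hsp mulrA; congr (_ * _).
apply: eq_bigr => Z hZ; case: ifP => // /orP [/eqP EZ|/eqP EZ].
  by move: n1; rewrite -EZ in_setU1 hZ orbT.
by move: n2; rewrite -EZ hZ.
Qed.

Lemma diag_psd (U : finType) (r : U -> U -> C) : (forall x y : U, x != y -> r x y = 0) ->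
  (forall x : U, 0 <= r x x) -> forall v : U -> C, 0 <= \sum_x \sum_y (v x)^* * r x y * v y.
Proof.
move=> h0 hp v; apply: sumr_ge0 => x _; rewrite (bigD1 x) //= big1 ?addr0; last first.
  by move=> y yx; rewrite h0 ?mulr0 ?mul0r // eq_sym.
have -> : (v x)^* * r x x * v x = r x x * (v x * (v x)^*) by ring.
by apply: mulr_ge0 => //; apply: mul_conjC_ge0.
Qed.

Section GHZ.
Variable hd : forall i, (1 < d i)%N.
Definition Z0 : T := [ffun i => Ordinal (ltnW (hd i))].
Definition O1 : T := [ffun i => Ordinal (hd i)].
Definition ghz X : conf d X -> conf d X -> C := fun al be =>
  if (al == be) && ((al == restr X Z0) || (al == restr X O1)) then 2^-1 else 0.
Arguments ghz X _ _ : clear implicits.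
Definition rhoG P a b := \prod_(X in P) ghz X (restr X a) (restr X b).

Lemma Z0v i : nat_of_ord (Z0 i) = 0%N. Proof. by rewrite ffunE. Qed.
Lemma O1v i : nat_of_ord (O1 i) = 1%N. Proof. by rewrite ffunE. Qed.

Lemma ghz_ge0 X al be : 0 <= ghz X al be.
Proof. by rewrite /ghz; case: ifP => _ //; rewrite invr_ge0 ler0n. Qed.

Lemma ZO X : X != set0 -> restr X Z0 != restr X O1.
Proof.
case/set0Pn => i iX; apply/negP => /eqP /ffunP /(_ (exist _ i iX)).
by rewrite !ffunE /= => /(congr1 val).
Qed.

Lemma ghz_density X : X != set0 -> is_density (ghz X).
Proof.
move=> nX; split.
  apply: diag_psd; last by move=> a; apply: ghz_ge0.
  by move=> a b ab; rewrite /ghz (negbTE ab).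
transitivity (\sum_(al in [set restr X Z0; restr X O1]) (2^-1 : C)).
  rewrite [RHS]big_mkcond; apply: eq_bigr => al _; by rewrite /ghz eqxx /= !inE.
rewrite sumr_const cards2 (ZO nX) /= -(mulr_natl (2^-1 : C) 2) mulfV //.
by rewrite pnatr_eq0.
Qed.

Lemma rhoG_density P : partition P setT -> is_density (rhoG P).
Proof.
case/and3P => /eqP hc tP h0; split.
  apply: diag_psd; last by move=> a; apply: prodr_ge0 => X _; apply: ghz_ge0.
  move=> a b ab; case: (pickP (fun i => a i != b i)) => [i hi|h]; last first.
    have E : a = b by apply/ffunP => i; apply/eqP; move: (h i) => /= /negbFE.
    by rewrite E eqxx in ab.
  have : i \in cover P by rewrite hc inE.
  move=> /bigcupP [X hX iX]; rewrite /rhoG (big_setD1 X hX) /= {1}/ghz.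
  have -> : (restr X a == restr X b) = false.
    apply/negP => /eqP /ffunP /(_ (exist _ i iX)); rewrite !ffunE /= => E.
    by rewrite E eqxx in hi.
  by rewrite mul0r.
have -> : \sum_a rhoG P a a = S setT Z0 (fun c => \prod_(X in P) Fl ghz X c c).
  by rewrite S_setT.
rewrite -hc; apply: (@prod_trace P (fun X c => Fl ghz X c c)) => //.
  by move=> X _ x x' hx; apply: Fl_local.
move=> X e hX; apply: Fl_trace; apply: ghz_density.
by apply: contraNneq h0 => <-.
Qed.

Lemma rhoG_unc P : partition P setT -> unc P (rhoG P).
Proof.
move=> hP; split; first exact: rhoG_density.
exists ghz; split => //.
move=> X hX; apply: ghz_density; case/and3P: hP => _ _ h0.
by apply: contraNneq h0 => <-.
Qed.

Lemma rhoG_refines P Q : partition P setT -> partition Q setT -> unc Q (rhoG P) -> refines P Q.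
Proof.
case/and3P => /eqP hcP tP h0P; case/and3P => /eqP hcQ tQ h0Q.
case=> _ [rY [_ hrY]].
apply/forallP => X; apply/implyP => hX; case: (boolP [exists Y in Q, X \subset Y]) => // hn.
have nX : X != set0 by apply: contraNneq h0P => <-.
case/set0Pn: nX => i iX.
have : i \in cover Q by rewrite hcQ inE.
move=> /bigcupP [Y1 hY1 iY1].
have nsub : ~~ (X \subset Y1).
  by apply: contra hn => s; apply/existsP; exists Y1; rewrite hY1 s.
case/subsetPn: nsub => j jX jY1.
set a1 := mix X O1 Z0; set c := mix Y1 Z0 a1.
have h2 : (2^-1 : C) != 0 by rewrite invr_eq0 pnatr_eq0.
have nz0 : rhoG P Z0 Z0 != 0.
  by apply/negP => /prodf_eq0 [X' _]; rewrite /ghz !eqxx /= (negbTE h2).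
have ha1 : forall X', X' \in P -> (restr X' a1 == restr X' Z0) || (restr X' a1 == restr X' O1).
  move=> X' hX'; case: (eqVneq X' X) => [->|ne].
    by apply/orP; right; apply/eqP/restr_agree => k kX; rewrite mixE kX.
  apply/orP; left; apply/eqP/restr_agree => k kX'; rewrite mixE.
  case: ifP => // kX; by move: ne; rewrite (triv_eq tP hX' hX kX' kX) eqxx.
have nz1 : rhoG P a1 a1 != 0.
  by apply/negP => /prodf_eq0 [X' hX']; rewrite /ghz eqxx (ha1 X' hX') /= (negbTE h2).
have nz : forall a, rhoG P a a != 0 -> forall Y, Y \in Q -> rY Y (restr Y a) (restr Y a) != 0.
  move=> a ha Y hY; apply: contra ha; rewrite hrY => hz; apply/prodf_eq0; exists Y => //.
have nzc : rhoG P c c != 0.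
  rewrite hrY; apply/negP => /prodf_eq0 [Y hY]; case: (eqVneq Y Y1) => [->|ne].
    have -> : restr Y1 c = restr Y1 Z0 by apply/restr_agree => k kY; rewrite mixE kY.
    by rewrite (negbTE (nz _ nz0 _ hY1)).
  have -> : restr Y c = restr Y a1.
    apply/restr_agree => k kY; rewrite mixE; case: ifP => // kY1.
    by move: ne; rewrite (triv_eq tQ hY hY1 kY kY1) eqxx.
  by rewrite (negbTE (nz _ nz1 _ hY)).
move: nzc; rewrite /rhoG (big_setD1 X hX) /= {1}/ghz.
have -> : (restr X c == restr X Z0) || (restr X c == restr X O1) = false.
  apply/negbTE; rewrite negb_or; apply/andP; split; apply/negP => /eqP /ffunP.
    move=> /(_ (exist _ j jX)); rewrite !ffunE /=.
    by rewrite (negbTE jY1) jX => /(congr1 val) /= /eqP.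
  move=> /(_ (exist _ i iX)); rewrite !ffunE /=.
  by rewrite iY1 => /(congr1 val) /= /eqP.
by rewrite andbF mul0r eqxx.
Qed.
End GHZ.
End A.

From Stdlib Require Import ClassicalEpsilon.

Definition asb (P : Prop) : bool := if excluded_middle_informative P then true else false.
Lemma asbP (P : Prop) : reflect P (asb P).
Proof. by rewrite /asb; case: excluded_middle_informative => h; constructor. Qed.

Lemma refines_refl n (xi : {set {set 'I_n}}) : refines xi xi.
Proof. by apply/forallP => X; apply/implyP => hX; apply/existsP; exists X; rewrite hX subxx. Qed.

Lemma refines_trans n (u xi z : {set {set 'I_n}}) : refines u xi -> refines xi z -> refines u z.
Proof.
move=> /forallP h1 /forallP h2; apply/forallP => X; apply/implyP => hX.
move: (h1 X); rewrite hX /= => /existsP [Y /andP [hY sXY]].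
move: (h2 Y); rewrite hY /= => /existsP [Z /andP [hZ sYZ]].
by apply/existsP; exists Z; rewrite hZ (subset_trans sXY sYZ).
Qed.

Lemma down_sub n (S : {set {set {set 'I_n}}}) xi0 xi : S \in PII n -> xi \in S ->
  refines xi0 xi -> down xi0 \subset S.
Proof.
rewrite inE => /and3P [_ _ /forallP dS] hxi hr; apply/subsetP => u.
rewrite inE => /andP [hu hur].
move: (dS xi); rewrite hxi /= => /forallP /(_ u); rewrite hu /= => /implyP; apply.
exact: refines_trans hur hr.
Qed.

Lemma in_down n (xi : {set {set 'I_n}}) : xi \in PI n -> xi \in down xi.
Proof. by move=> h; rewrite inE h refines_refl. Qed.

Lemma PII_PI n (S : {set {set {set 'I_n}}}) xi : S \in PII n -> xi \in S -> xi \in PI n.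
Proof. by rewrite inE => /and3P [_ /subsetP s _] /s. Qed.

Unset Implicit Arguments.

Theorem proposition3 (C : numClosedFieldType) (n : nat) (d : 'I_n -> nat)
  (hn : (1 <= n)%N) (hd : forall i : 'I_n, (1 < d i)%N)
  (Xi : {set {set {set {set 'I_n}}}}) (hXi : Xi \in PIII n) :
  (exists rho : confL d -> confL d -> C, C_unc Xi rho) <->
  (exists2 xi, xi \in PI n & Xi = up (down xi)).
Proof.
split.
  move=> [rho [hdens [hneg hpos]]].
  move: (hXi); rewrite inE => /and3P [/set0Pn [S0 hS0] /subsetP sXi _].
  case: (hpos S0 hS0) => xi1 hxi1 hu1.
  have hPI1 : xi1 \in PI n by apply: PII_PI (sXi _ hS0) hxi1.
  pose U := [set xi | (xi \in PI n) && asb (unc xi rho)].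
  have hU1 : xi1 \in U by rewrite inE hPI1; apply/asbP.
  case: (@arg_maxnP _ xi1 (fun x => x \in U) (fun x => #|x|) hU1) => xi0.
  rewrite inE => /andP [hPI0 /asbP hu0] hmax.
  have key : forall xi, xi \in PI n -> unc xi rho -> refines xi0 xi.
    move=> xi hPI hu; apply/forallP => X; apply/implyP => hX.
    case: (boolP [exists Y in xi, X \subset Y]) => // hno.
    have hP0 : partition xi0 setT by move: hPI0; rewrite inE.
    have hP : partition xi setT by move: hPI; rewrite inE.
    have nX : X != set0 by case/and3P: hP0 => _ _ h0; apply: contraNneq h0 => <-.
    case/set0Pn: nX => i iX.
    have : i \in cover xi by case/and3P: hP => /eqP -> _ _; rewrite inE.
    move=> /bigcupP [Y hY iY].
    have nsub : ~~ (X \subset Y).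
      by apply: contra hno => s; apply/existsP; exists Y; rewrite hY s.
    case/subsetPn: nsub => j jX jY.
    have nI : X :&: Y != set0 by apply/set0Pn; exists i; rewrite inE iX iY.
    have nD : X :\: Y != set0 by apply/set0Pn; exists j; rewrite inE jX jY.
    have [hP' hc'] := refP_part hP0 hX nI nD.
    have hu' := refP_unc (Z0 hd) hP0 hP hu0 hu hX hY nI nD.
    have : refP xi0 X Y \in U by rewrite inE /PI inE hP'; apply/asbP.
    by move=> /hmax; rewrite hc' /= ltnn.
  exists xi0 => //; apply/setP => S; rewrite inE.
  case hS: (S \in Xi).
    have hSP := sXi _ hS; rewrite hSP /=.
    case: (hpos S hS) => xi hxi hu.
    by rewrite (down_sub hSP hxi (key xi (PII_PI hSP hxi) hu)).
  apply/esym/negbTE/andP => -[hSP hsub].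
  have h0 : xi0 \in S by apply: (subsetP hsub); apply: in_down.
  by apply: (hneg S); [rewrite inE hS hSP | exists xi0].
move=> [xi0 hxi0 ->].
have hP0 : partition xi0 setT by move: hxi0; rewrite inE.
exists (@rhoG C n d hd xi0); split; first exact: rhoG_density.
split.
  move=> S'; rewrite in_setD => /andP [hn' hS'] [xi hxi hu].
  have hPI : xi \in PI n by apply: PII_PI hS' hxi.
  have hP : partition xi setT by move: hPI; rewrite inE.
  have hr := rhoG_refines hP0 hP hu.
  by move: hn'; rewrite inE hS' (down_sub hS' hxi hr).
move=> S; rewrite inE => /andP [hSP hsub]; exists xi0.
  by apply: (subsetP hsub); apply: in_down.
exact: rhoG_unc.
Qed.
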